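(* Let $(\mathbf{M}_i)_{i\in I}$ be a family of $L$-structures with an emerging metric along an ultrafilter $\mathcal{D}$ on $I$, with local ultraproduct $\mathbf{M}_{\mathrm{loc}}$. Let $\sigma(\bar x)$ be a formula (in the sense of general real-valued structures) in the vocabulary $L^+$ all of whose quantifiers are restricted to sorts $S_m$, and for each $i\in I$ let $\bar a(i)$ be a tuple of parameters in $M_i$, all lying in $S_{m_0}(M_i)$ for a fixed $m_0\in\mathbb{N}$. Let $\bar a=\mathsf{lm}^{\mathrm{loc}}([\bar a(i)]_{\mathcal{D}})\in\mathbf{M}_{\mathrm{loc}}$. Then $$\lim_{\mathcal{D}}\ \sigma^{\mathbf{M}_i}(\bar a(i))=\sigma^{\mathbf{M}_{\mathrm{loc}}}(\bar a),$$ where $\lim_{\mathcal{D}}$ is the limit of real numbers along the ultrafilter $\mathcal{D}$.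
   Context: Emerging metric: each $M_i$ carries subsets $S_m(M_i)$, $m\in\mathbb{N}$, with $S_m(M_i)\subseteq S_{m+1}(M_i)$, $\bigcup_m S_m(M_i)=M_i$, and a distance function $\mathsf{d}_i:M_i^2\to\mathbb{R}_{\ge0}$; in the first-order ultraproduct ${}^*\mathbf{M}=\prod_{\mathcal{D}}\mathbf{M}_i$, with $S_m({}^*M)=\prod_{\mathcal{D}}S_m(M_i)$ and induced hyperreal-valued $\mathsf{d}$, one requires: (1) the triangle inequality; (2) for each $n$-ary function symbol $f$ and $m$ some $k$ with $f(S_m({}^*M)^n)\subseteq S_k({}^*M)$; (3) $\mathsf{d}(x,y)\le m$ on $S_m({}^*M)$; (4) for each $f$, $m$, real $\epsilon>0$ a real $\delta>0$ with $\mathsf{d}(f(\bar x),f(\bar y))<\epsilon$ whenever $\bar x,\bar y\in S_m({}^*M)^n$, $\mathsf{d}(x_j,y_j)<\delta$ for all $j$; (5) for each relation symbol $P$, $m$, and $\bar x^0\in S_m({}^*M)^n\setminus P$ a real $\delta>0$ such that $\bar x\notin P$ whenever $\mathsf{d}(x^0_j,x_j)<\delta$ for all $j$. The local part ${}^*\mathbf{M}_{\mathrm{loc}}$ has universe $\bigcup_{m\in\mathbb{N}}S_m({}^*M)$; $x\approx y$ iff $\mathsf{d}(x,y)\le1/n$ for all $n\in\mathbb{N}$; $\mathbf{M}_{\mathrm{loc}}={}^*\mathbf{M}_{\mathrm{loc}}/\!\approx$ with induced functions, relations interpreted as images, $S_m$ interpreted as the image of $S_m({}^*M)$, and metric $\mathrm{st}\,\mathsf{d}$;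 $\mathsf{lm}^{\mathrm{loc}}$ is the quotient map. The vocabulary $L^+$ is $L$ without equality together with the distance symbol $\mathsf{d}$ and unary predicates $S_m$. Formulas are those of general (real-valued) structures: atomic formulas are $\mathsf{d}(t_1,t_2)$ and $P(\bar t)$ (a relation taking truth value $0$ if it holds and $1$ otherwise), connectives are arbitrary continuous real functions of finitely many arguments, quantifiers are $\sup_x$ and $\inf_x$ (here restricted to $x\in S_m$), and the truth value $\sigma^{\mathbf{N}}(\bar a)$ in a structure $\mathbf{N}$ is defined by induction on the formula, with $\mathsf{d}$ interpreted as $\mathsf{d}_i$ in $\mathbf{M}_i$ and as the metric in $\mathbf{M}_{\mathrm{loc}}$. *)

(* Defs.v *)
From Stdlib Require Import Reals Lra Lia Arith ClassicalEpsilon Classical.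
From Coquelicot Require Import Coquelicot.
Open Scope R_scope.

Definition Ix (n : nat) : Type := {k : nat | (k < n)%nat}.

Record Vocab := {
  fsym : Type;
  farity : fsym -> nat;
  rsym : Type;
  rarity : rsym -> nat }.

(* ---------- a structure for the vocabulary L^+ :
   L without equality, plus the distance symbol d and unary predicates S_m --- *)
Record GStruct (L : Vocab) := {
  carrier : Type;
  gd : carrier -> carrier -> R;
  gfn : forall f : fsym L, (Ix (farity L f) -> carrier) -> carrier;
  grl : forall P : rsym L, (Ix (rarity L P) -> carrier) -> Prop;
  gS : nat -> carrier -> Prop }.
Arguments carrier {L}.
Arguments gd {L}.
Arguments gfn {L}.
Arguments grl {L}.
Arguments gS {L}.

Definition cont_conn {k : nat} (u : (Ix k -> R) -> R) : Prop :=
  forall (x : Ix k -> R) (eps : R), 0 < eps ->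
    exists delta, 0 < delta /\
      forall y : Ix k -> R, (forall j, Rabs (y j - x j) < delta) ->
        Rabs (u y - u x) < eps.

Inductive term (L : Vocab) (n : nat) : Type :=
| tvar : Ix n -> term L n
| tapp : forall f : fsym L, (Ix (farity L f) -> term L n) -> term L n.
Arguments tvar {L n}.
Arguments tapp {L n}.

(* formulas with free variables among x_0,...,x_{n-1};
   quantifiers bind the new variable x_n and are restricted to S_m *)
Inductive formula (L : Vocab) : nat -> Type :=
| fdist : forall n, term L n -> term L n -> formula L n
| frel : forall n (P : rsym L), (Ix (rarity L P) -> term L n) -> formula L n
| fconn : forall n k (u : (Ix k -> R) -> R), cont_conn u ->
          (Ix k -> formula L n) -> formula L n
| fsup : forall n, nat -> formula L (S n) -> formula L n
| finf : forall n, nat -> formula L (S n) -> formula L n.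
Arguments fdist {L n}.
Arguments frel {L n}.
Arguments fconn {L n k}.
Arguments fsup {L n}.
Arguments finf {L n}.

Definition ext {T : Type} {n : nat} (a : Ix n -> T) (b : T) : Ix (S n) -> T :=
  fun j => match lt_dec (proj1_sig j) n with
           | left h => a (exist _ (proj1_sig j) h)
           | right _ => b
           end.

Fixpoint teval {L : Vocab} (M : GStruct L) {n : nat} (t : term L n)
  (a : Ix n -> carrier M) : carrier M :=
  match t with
  | tvar j => a j
  | tapp f ts => gfn M f (fun j => teval M (ts j) a)
  end.

(* truth value sigma^N(a); relations have value 0 if they hold, 1 otherwise;
   sup / inf over S_m (as extended reals, then 'real'; unbounded/empty
   cases get Coquelicot's conventional value) *)
Fixpoint eval {L : Vocab} (M : GStruct L) {n : nat} (phi : formula L n)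
  : (Ix n -> carrier M) -> R :=
  match phi in formula _ n return (Ix n -> carrier M) -> R with
  | fdist _ t1 t2 => fun a => gd M (teval M t1 a) (teval M t2 a)
  | frel _ P ts => fun a =>
      if excluded_middle_informative (grl M P (fun j => teval M (ts j) a))
      then 0 else 1
  | fconn _ _ u _ ps => fun a => u (fun j => eval M (ps j) a)
  | fsup _ m psi => fun a =>
      real (Lub_Rbar (fun r => exists b, gS M m b /\ r = eval M psi (ext a b)))
  | finf _ m psi => fun a =>
      real (Glb_Rbar (fun r => exists b, gS M m b /\ r = eval M psi (ext a b)))
  end.

Record ultrafilter {I : Type} (D : (I -> Prop) -> Prop) : Prop := {
  uf_full : D (fun _ => True);
  uf_empty : ~ D (fun _ => False);
  uf_up : forall A B : I -> Prop, D A -> (forall i, A i -> B i) -> D B;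
  uf_inter : forall A B : I -> Prop, D A -> D B -> D (fun i => A i /\ B i);
  uf_ultra : forall A : I -> Prop, D A \/ D (fun i => ~ A i) }.

Definition ulim {I : Type} (D : (I -> Prop) -> Prop) (u : I -> R) (r : R) : Prop :=
  forall eps, 0 < eps -> D (fun i => Rabs (u i - r) < eps).

(* the D-limit as a value (standard part of the hyperreal [u]_D) *)
Definition Dlim {I : Type} (D : (I -> Prop) -> Prop) (u : I -> R) : R :=
  epsilon (inhabits 0) (fun r => ulim D u r).

(* ---------- the ultraproduct *M, via representatives ---------- *)
Section Ultra.
Context {L : Vocab} {I : Type} (D : (I -> Prop) -> Prop) (M : I -> GStruct L).

Definition seqs : Type := forall i, carrier (M i).

Definition inS (m : nat) (x : seqs) : Prop := D (fun i => gS (M i) m (x i)).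

Definition uapp (f : fsym L) (xs : Ix (farity L f) -> seqs) : seqs :=
  fun i => gfn (M i) f (fun j => xs j i).

Definition urel (P : rsym L) (xs : Ix (rarity L P) -> seqs) : Prop :=
  D (fun i => grl (M i) P (fun j => xs j i)).

Record emerging_metric : Prop := {
  em_mono : forall i m x, gS (M i) m x -> gS (M i) (S m) x;
  em_cover : forall i x, exists m, gS (M i) m x;
  em_nonneg : forall i x y, 0 <= gd (M i) x y;
  em_refl : forall x : seqs, D (fun i => gd (M i) (x i) (x i) = 0);
  em_sym : forall x y : seqs, D (fun i => gd (M i) (x i) (y i) = gd (M i) (y i) (x i));
  em_tri : forall x y z : seqs,
      D (fun i => gd (M i) (x i) (z i) <= gd (M i) (x i) (y i) + gd (M i) (y i) (z i));
  em_fun : forall f m, exists k, forall xs : Ix (farity L f) -> seqs,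
      (forall j, inS m (xs j)) -> inS k (uapp f xs);
  em_bound : forall m (x y : seqs), inS m x -> inS m y ->
      D (fun i => gd (M i) (x i) (y i) <= INR m);
  em_cont : forall f m eps, 0 < eps -> exists delta, 0 < delta /\
      forall xs ys : Ix (farity L f) -> seqs,
        (forall j, inS m (xs j)) -> (forall j, inS m (ys j)) ->
        (forall j, D (fun i => gd (M i) (xs j i) (ys j i) < delta)) ->
        D (fun i => gd (M i) (uapp f xs i) (uapp f ys i) < eps);
  em_rel : forall P m (x0 : Ix (rarity L P) -> seqs),
      (forall j, inS m (x0 j)) -> ~ urel P x0 ->
      exists delta, 0 < delta /\
        forall x : Ix (rarity L P) -> seqs,
          (forall j, D (fun i => gd (M i) (x0 j i) (x j i) < delta)) -> ~ urel P x }.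

Definition local (x : seqs) : Prop := exists m, inS m x.

Definition approx (x y : seqs) : Prop :=
  forall n : nat, (0 < n)%nat -> D (fun i => gd (M i) (x i) (y i) <= / INR n).

(* elements of M_loc: ~-classes of local elements *)
Record locq : Type := {
  cls : seqs -> Prop;
  cls_ok : exists x, local x /\ cls = approx x }.

Definition lm (x : seqs) (h : local x) : locq :=
  {| cls := approx x; cls_ok := ex_intro _ x (conj h eq_refl) |}.

Definition rep (c : locq) : seqs :=
  proj1_sig (constructive_indefinite_description _ (cls_ok c)).

Lemma rep_local (c : locq) : local (rep c).
Proof.
  unfold rep. exact (proj1 (proj2_sig (constructive_indefinite_description _ (cls_ok c)))).
Qed.

Lemma finite_bound (n : nat) (Q : nat -> nat -> Prop) :
  (forall k, (k < n)%nat -> exists m, Q k m) ->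
  (forall k m m', (m <= m')%nat -> Q k m -> Q k m') ->
  exists m, forall k, (k < n)%nat -> Q k m.
Proof.
  intros H Hm. induction n as [|n IH].
  - exists 0%nat. intros k hk. lia.
  - destruct IH as [m1 H1].
    + intros k hk. apply H. lia.
    + destruct (H n (Nat.lt_succ_diag_r n)) as [m2 H2].
      exists (Nat.max m1 m2). intros k hk.
      destruct (Nat.eq_dec k n) as [->|hne].
      * apply (Hm n m2); [lia|exact H2].
      * apply (Hm k m1); [lia|]. apply H1. lia.
Qed.

Lemma inS_mono (HD : ultrafilter D) (HM : emerging_metric) m m' x :
  (m <= m')%nat -> inS m x -> inS m' x.
Proof.
  intros hle hx. induction hle as [|m' hle IH]; [exact hx|].
  apply (uf_up D HD _ _ IH). intros i hi. apply (em_mono HM). exact hi.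
Qed.

Lemma emerging_local (HD : ultrafilter D) (HM : emerging_metric)
  (f : fsym L) (xs : Ix (farity L f) -> seqs) :
  (forall j, local (xs j)) -> local (uapp f xs).
Proof.
  intros hl.
  destruct (finite_bound (farity L f)
     (fun k m => forall h : (k < farity L f)%nat, inS m (xs (exist _ k h))))
    as [m Hm].
  - intros k hk. destruct (hl (exist _ k hk)) as [m hm]. exists m.
    intros h. rewrite (Peano_dec.le_unique _ _ h hk). exact hm.
  - intros k m m' hle hq h. apply (inS_mono HD HM m m'); [exact hle|apply hq].
  - destruct (em_fun HM f m) as [k Hk]. exists k. apply Hk.
    intros [j hj]. apply Hm; exact hj.
Qed.

Lemma all_local (HD : ultrafilter D) (m0 : nat) (x : seqs) :
  (forall i, gS (M i) m0 (x i)) -> local x.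
Proof.
  intros h. exists m0. apply (uf_up D HD (fun _ => True)); [apply (uf_full D HD)|].
  intros i _. apply h.
Qed.

Definition Mloc (HD : ultrafilter D) (HM : emerging_metric) : GStruct L :=
  {| carrier := locq;
     gd := fun c c' => Dlim D (fun i => gd (M i) (rep c i) (rep c' i));
     gfn := fun f cs => lm (uapp f (fun j => rep (cs j)))
              (emerging_local HD HM f _ (fun j => rep_local (cs j)));
     grl := fun P cs => exists ys : Ix (rarity L P) -> seqs,
              (forall j, local (ys j) /\ cls (cs j) = approx (ys j)) /\ urel P ys;
     gS := fun m c => exists x, inS m x /\ cls c = approx x |}.

End Ultra.

(* Main.v *)
Require Import Defs.
From Stdlib Require Import Reals Lra Lia Arith ClassicalEpsilon Classical FunctionalExtensionality PropExtensionality.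
From Coquelicot Require Import Coquelicot.
Open Scope R_scope.

Lemma Ix_eq {k} (a b : Ix k) : proj1_sig a = proj1_sig b -> a = b.
Proof. destruct a as [a ha], b as [b hb]; simpl; intros ->; f_equal; apply Peano_dec.le_unique. Qed.

Lemma BW1 (w : nat -> R) B : (forall n, Rabs (w n) <= B) ->
  exists psi : nat -> nat, (forall n, (psi n < psi (S n))%nat) /\ exists l, Un_cv (fun n => w (psi n)) l.
Proof.
  intros hb.
  destruct (Bolzano_Weierstrass w (fun c => -B <= c <= B) (compact_P3 _ _)) as [l Hl].
  { intro n; specialize (hb n); unfold Rabs in hb; destruct Rcase_abs; lra. }
  assert (G : forall N e : nat, {p | (N <= p)%nat /\ Rabs (w p - l) < / INR (S e)}).
  { intros N e. apply constructive_indefinite_description.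
    assert (hp : 0 < / INR (S e)) by (apply Rinv_0_lt_compat, lt_0_INR; lia).
    destruct (Hl (fun y => Rabs (y - l) < / INR (S e)) N) as [p hp'].
    - exists (mkposreal _ hp). intros y hy; exact hy.
    - exists p; exact hp'. }
  pose (psi := fix f (n:nat) : nat := match n with O => proj1_sig (G O O) | S n' => proj1_sig (G (S (f n')) (S n')) end).
  assert (Hc : forall n, Rabs (w (psi n) - l) < / INR (S n)).
  { intros [|n]; [exact (proj2 (proj2_sig (G 0%nat 0%nat)))|exact (proj2 (proj2_sig (G _ (S n))))]. }
  exists psi; split.
  - intros n. pose proof (proj1 (proj2_sig (G (S (psi n)) (S n)))) as h.
    change (psi (S n)) with (proj1_sig (G (S (psi n)) (S n))). clearbody psi. lia.
  - exists l. intros eps heps. destruct (archimed_cor1 eps heps) as [N [hN hN0]].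
    exists N. intros n hn. unfold Rdist.
    apply Rlt_trans with (/ INR (S n)); [apply Hc|].
    apply Rle_lt_trans with (/ INR N); [|exact hN].
    apply Rinv_le_contravar; [apply lt_0_INR; lia| apply le_INR; lia].
Qed.

Lemma sub_ge (phi : nat -> nat) : (forall n, (phi n < phi (S n))%nat) -> forall n, (n <= phi n)%nat.
Proof. intros h n; induction n; [lia|specialize (h n); lia]. Qed.

Lemma Un_cv_sub a l (phi : nat -> nat) : Un_cv a l -> (forall n, (phi n < phi (S n))%nat) ->
  Un_cv (fun n => a (phi n)) l.
Proof.
  intros H hp eps he. destruct (H eps he) as [N HN]. exists N. intros n hn.
  apply HN. pose proof (sub_ge phi hp n). lia.
Qed.

Definition liftI {k} (j : Ix k) : Ix (S k) :=
  exist _ (proj1_sig j) (Nat.lt_lt_succ_r _ _ (proj2_sig j)).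
Definition lastI (k : nat) : Ix (S k) := exist _ k (Nat.lt_succ_diag_r k).

Lemma SC (k : nat) : forall (y : nat -> Ix k -> R) B, (forall n j, Rabs (y n j) <= B) ->
  exists phi : nat -> nat, (forall n, (phi n < phi (S n))%nat) /\
    exists x : Ix k -> R, forall j, Un_cv (fun n => y (phi n) j) (x j).
Proof.
  induction k as [|k IH]; intros y B hb.
  - exists (fun n => n). split; [intros; lia|]. exists (fun _ => 0).
    intros [j hj]; lia.
  - destruct (IH (fun n j => y n (liftI j)) B (fun n j => hb n (liftI j))) as [phi [hphi [x' hx']]].
    destruct (BW1 (fun n => y (phi n) (lastI k)) B (fun n => hb _ _)) as [psi [hpsi [l hl]]].
    exists (fun n => phi (psi n)). split.
    + intros n. specialize (hpsi n).
      assert (forall a b, (a < b)%nat -> (phi a < phi b)%nat).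
      { intros a b hab. induction hab; [apply hphi|]. specialize (hphi m); lia. }
      apply H; auto.
    + exists (fun j => match lt_dec (proj1_sig j) k with
                       | left h => x' (exist _ (proj1_sig j) h) | right _ => l end).
      intros j. destruct (lt_dec (proj1_sig j) k) as [h|h].
      * destruct j as [j0 hj]; simpl in *.
        assert (E : exist (fun a => (a < S k)%nat) j0 hj = liftI (exist (fun a => (a<k)%nat) j0 h)) by (apply Ix_eq; reflexivity).
        rewrite E.
        apply (Un_cv_sub (fun n => y (phi n) (liftI (exist _ j0 h)))); [|exact hpsi].
        apply hx'.
      * assert (j = lastI k) as -> by (apply Ix_eq; simpl; destruct j; simpl in *; lia).
        exact hl.
Qed.

Lemma box_bounded k (u : (Ix k -> R) -> R) : cont_conn u -> forall B,
  exists C, forall y, (forall j, Rabs (y j) <= B) -> Rabs (u y) <= C.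
Proof.
  intros hu B. apply NNPP. intros hn.
  assert (Hy : forall N : nat, exists y, (forall j, Rabs (y j) <= B) /\ INR N < Rabs (u y)).
  { intros N. apply NNPP; intros h2. apply hn. exists (INR N). intros y hy.
    apply Rnot_lt_le. intros h3. apply h2. exists y. auto. }
  destruct (choice _ Hy) as [y Hy'].
  destruct (SC k y B (fun n => proj1 (Hy' n))) as [phi [hphi [x hx]]].
  destruct (hu x 1 Rlt_0_1) as [delta [hd Hd]].
  destruct (finite_bound k (fun j N => forall h : (j < k)%nat, forall n, (n >= N)%nat ->
       Rabs (y (phi n) (exist _ j h) - x (exist _ j h)) < delta)) as [N HN].
  - intros j hj. destruct (hx (exist _ j hj) delta hd) as [N HN]. exists N.
    intros h. rewrite (Peano_dec.le_unique _ _ h hj). exact HN.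
  - intros j m m' hmm hq h n0 hn0. apply hq. lia.
  - destruct (INR_unbounded (Rabs (u x) + 1)) as [K hK].
    set (n := Nat.max N K).
    assert (H1 : Rabs (u (y (phi n)) - u x) < 1).
    { apply Hd. intros [j hj]. apply (HN j hj hj). unfold n; lia. }
    pose proof (proj2 (Hy' (phi n))) as H2.
    assert (INR K <= INR (phi n)) by (apply le_INR; pose proof (sub_ge phi hphi n); unfold n in *; lia).
    pose proof (Rabs_triang_inv (u (y (phi n))) (u x)). lra.
Qed.

Lemma LubF (S : R -> Prop) B : (exists s, S s) -> (forall s, S s -> s <= B) ->
  exists T, Lub_Rbar S = Finite T /\ (forall s, S s -> s <= T) /\
    (forall eps, 0 < eps -> exists s, S s /\ T - eps < s).
Proof.
  intros [s0 hs0] hB. pose proof (Lub_Rbar_correct S) as [ub lst].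
  assert (hle : Rbar_le (Lub_Rbar S) (Finite B)) by (apply lst; intros x hx; simpl; auto).
  revert ub lst hle. destruct (Lub_Rbar S) as [T| |] eqn:E; intros ub lst hle.
  - exists T. split; [reflexivity|]. split.
    + intros s hs. exact (ub s hs).
    + intros eps he. apply NNPP; intros hn.
      assert (h : Rbar_le (Finite T) (Finite (T - eps))).
      { apply lst. intros x hx. simpl. apply Rnot_lt_le. intros hlt. apply hn. exists x; split; auto. }
      simpl in h. lra.
  - simpl in hle. contradiction.
  - specialize (ub s0 hs0). simpl in ub. contradiction.
Qed.

Lemma LubE (S : R -> Prop) : (forall s, ~ S s) -> Lub_Rbar S = m_infty.
Proof.
  intros h. apply is_lub_Rbar_unique. split.
  - intros x hx. exfalso; exact (h x hx).
  - intros b _. destruct b; simpl; auto.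
Qed.

Lemma Glb_opp (S : R -> Prop) : real (Glb_Rbar S) = - real (Lub_Rbar (fun x => S (-x))).
Proof.
  assert (E : Glb_Rbar S = Rbar_opp (Lub_Rbar (fun x => S (-x)))).
  { apply is_glb_Rbar_unique. destruct (Lub_Rbar_correct (fun x => S (-x))) as [ub lst].
    destruct (Lub_Rbar (fun x => S (-x))) as [l| |] eqn:El; split.
    - intros x hx. assert (h : S (- - x)) by (rewrite Ropp_involutive; exact hx).
      specialize (ub _ h). simpl in *. lra.
    - intros b hb. destruct b as [b| |]; simpl; auto.
      + assert (h : Rbar_le (Finite l) (Finite (-b))).
        { apply lst. intros x hx. specialize (hb _ hx). simpl in *. lra. }
        simpl in h. lra.
      + assert (h : Rbar_le (Finite l) m_infty).
        { apply lst. intros x hx. specialize (hb _ hx). simpl in *. auto. }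
        simpl in h; auto.
    - intros x hx. simpl. auto.
    - intros b hb. destruct b as [b| |]; simpl; auto.
      + assert (h : Rbar_le p_infty (Finite (-b))).
        { apply lst. intros x hx. specialize (hb _ hx). simpl in *. lra. }
        simpl in h; auto.
      + assert (h : Rbar_le p_infty m_infty).
        { apply lst. intros x hx. specialize (hb _ hx). simpl in *. auto. }
        simpl in h; auto.
    - intros x hx. assert (h : S (- - x)) by (rewrite Ropp_involutive; exact hx).
      specialize (ub _ h). simpl in *. auto.
    - intros b hb. destruct b as [b| |]; simpl; auto. }
  rewrite E. destruct (Lub_Rbar _); simpl; lra.
Qed.

Section UF.
Context {I : Type} (D : (I -> Prop) -> Prop) (HD : ultrafilter D).

Lemma Dup (A B : I -> Prop) : D A -> (forall i, A i -> B i) -> D B.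
Proof. apply (uf_up D HD). Qed.
Lemma Dand (A B : I -> Prop) : D A -> D B -> D (fun i => A i /\ B i).
Proof. apply (uf_inter D HD). Qed.
Lemma Dfalse (A : I -> Prop) : D A -> (forall i, A i -> False) -> False.
Proof. intros h1 h2. apply (uf_empty D HD). apply (Dup A); auto. Qed.
Lemma Dall (A : I -> Prop) : (forall i, A i) -> D A.
Proof. intros h. apply (Dup (fun _ => True)); [apply (uf_full D HD)|auto]. Qed.
Lemma Dcases (A : I -> Prop) : D A \/ D (fun i => ~ A i).
Proof. apply (uf_ultra D HD). Qed.
Lemma Dnot (A : I -> Prop) : ~ D A -> D (fun i => ~ A i).
Proof. intros h. destruct (Dcases A); tauto. Qed.

Lemma D_forall_nat k (P : nat -> I -> Prop) :
  (forall j, (j < k)%nat -> D (P j)) -> D (fun i => forall j, (j < k)%nat -> P j i).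
Proof.
  induction k as [|k IH]; intros h.
  - apply Dall. intros i j hj; lia.
  - apply (Dup (fun i => (forall j, (j < k)%nat -> P j i) /\ P k i)).
    + apply Dand; [apply IH; intros; apply h; lia| apply h; lia].
    + intros i [h1 h2] j hj. destruct (Nat.eq_dec j k) as [->|hne]; auto. apply h1; lia.
Qed.

Lemma D_forall_Ix k (P : Ix k -> I -> Prop) :
  (forall j, D (P j)) -> D (fun i => forall j, P j i).
Proof.
  intros h. apply (Dup (fun i => forall j, (j < k)%nat -> forall hj, P (exist _ j hj) i)).
  - apply D_forall_nat. intros j hj. apply (Dup (P (exist _ j hj))); [apply h|].
    intros i hi hj'. rewrite (Peano_dec.le_unique _ _ hj' hj). exact hi.
  - intros i H [j hj]. apply H; exact hj.
Qed.

Lemma choose_sec {Y : I -> Type} (HY : forall i, inhabited (Y i)) (P : forall i, Y i -> Prop) :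
  D (fun i => exists y, P i y) -> exists z : forall i, Y i, D (fun i => P i (z i)).
Proof.
  intros h.
  exists (fun i => match excluded_middle_informative (exists y, P i y) with
           | left hh => proj1_sig (constructive_indefinite_description _ hh)
           | right _ => epsilon (HY i) (fun _ => True) end).
  apply (Dup _ _ h). intros i hi. destruct (excluded_middle_informative _) as [hh|hh].
  - apply (proj2_sig (constructive_indefinite_description _ hh)).
  - contradiction.
Qed.

Lemma unif {Y : I -> Type} (HY : forall i, inhabited (Y i)) (Q P : forall i, Y i -> Prop) :
  (forall z : forall i, Y i, D (fun i => Q i (z i)) -> D (fun i => P i (z i))) ->
  D (fun i => forall y, Q i y -> P i y).
Proof.
  intros h. destruct (Dcases (fun i => forall y, Q i y -> P i y)) as [hh|hh]; auto.
  exfalso. destruct (choose_sec HY (fun i y => Q i y /\ ~ P i y)) as [z hz].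
  - apply (Dup _ _ hh). intros i hi. apply NNPP. intros hn. apply hi. intros y hq.
    apply NNPP. intros hp. apply hn. exists y. auto.
  - assert (h2 := h z (Dup _ _ hz (fun i hi => proj1 hi))).
    apply (Dfalse _ (Dand _ _ hz h2)). intros i [[_ a] b]. auto.
Qed.

Lemma ulim_ext (u v : I -> R) r : ulim D u r -> D (fun i => u i = v i) -> ulim D v r.
Proof.
  intros h he eps heps. apply (Dup _ _ (Dand _ _ (h eps heps) he)). intros i [a b]. rewrite <- b; auto.
Qed.

Lemma ulim_le (u : I -> R) r B : ulim D u r -> D (fun i => Rabs (u i) <= B) -> Rabs r <= B.
Proof.
  intros h hb. apply Rnot_lt_le. intros hlt.
  apply (Dfalse _ (Dand _ _ (h (Rabs r - B) ltac:(lra)) hb)). intros i [a b].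
  pose proof (Rabs_triang_inv r (u i)). rewrite Rabs_minus_sym in a. lra.
Qed.

Lemma ulim_opp (u : I -> R) r : ulim D u r -> ulim D (fun i => - u i) (- r).
Proof.
  intros h eps he. apply (Dup _ _ (h eps he)). intros i hi.
  replace (- u i - - r) with (- (u i - r)) by ring. rewrite Rabs_Ropp; auto.
Qed.

Lemma ulim_exists (u : I -> R) B : D (fun i => Rabs (u i) <= B) -> exists r, ulim D u r.
Proof.
  intros hb.
  set (E := fun s => D (fun i => s <= u i)).
  assert (hE : forall s, E s -> s <= B).
  { intros s hs. apply Rnot_lt_le; intros hlt. apply (Dfalse _ (Dand _ _ hs hb)).
    intros i [a b]. unfold Rabs in b; destruct Rcase_abs; lra. }
  assert (hne : exists s, E s).
  { exists (-B). apply (Dup _ _ hb). intros i hi. unfold Rabs in hi; destruct Rcase_abs; lra. }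
  destruct (completeness E (ex_intro _ B hE) hne) as [r [hub hlub]].
  exists r. intros eps he.
  assert (ha : D (fun i => r - eps/2 <= u i)).
  { apply NNPP. intros hn. assert (r <= r - eps/2); [|lra].
    apply hlub. intros s hs. apply Rnot_lt_le. intros hlt. apply hn.
    apply (Dup _ _ hs). intros i hi. lra. }
  assert (hb2 : D (fun i => ~ (r + eps/2 <= u i))).
  { apply Dnot. intros hh. assert (r + eps/2 <= r) by (apply hub; exact hh). lra. }
  apply (Dup _ _ (Dand _ _ ha hb2)). intros i [a b].
  unfold Rabs; destruct Rcase_abs; lra.
Qed.

Lemma quant_sup (Si : I -> R -> Prop) (Sl : R -> Prop) (B : R) :
  D (fun i => forall s, Si i s -> Rabs s <= B) ->
  (forall r, Sl r -> exists v : I -> R, D (fun i => Si i (v i)) /\ ulim D v r) ->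
  (forall v : I -> R, D (fun i => Si i (v i)) -> exists r, Sl r /\ ulim D v r) ->
  ulim D (fun i => real (Lub_Rbar (Si i))) (real (Lub_Rbar Sl)).
Proof.
  intros hB H2 H3.
  destruct (classic (exists r, Sl r)) as [hne|hemp].
  - assert (hSl : forall r, Sl r -> r <= B).
    { intros r hr. destruct (H2 r hr) as [v [hv hl]].
      assert (Rabs r <= B); [|unfold Rabs in *; destruct Rcase_abs; lra].
      apply (ulim_le v r B hl). apply (Dup _ _ (Dand _ _ hv hB)). intros i [a b]; auto. }
    destruct (LubF Sl B hne hSl) as [T [ET [hT1 hT2]]]. rewrite ET. simpl.
    intros eps he.
    destruct (hT2 (eps/2) ltac:(lra)) as [r [hr hr2]].
    destruct (H2 r hr) as [v [hv hl]].
    assert (hup : D (fun i => forall s, Si i s -> s <= T + eps/2)).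
    { destruct (Dcases (fun i => forall s, Si i s -> s <= T + eps/2)) as [h|h]; auto. exfalso.
      destruct (choose_sec (Y := fun _ => R) (fun _ => inhabits 0) (fun i s => Si i s /\ T + eps/2 < s)) as [w hw].
      { apply (Dup _ _ h). intros i hi. apply NNPP; intros hn. apply hi. intros s hs.
        apply Rnot_lt_le; intros hlt. apply hn. exists s; auto. }
      destruct (H3 w (Dup _ _ hw (fun i hi => proj1 hi))) as [r' [hr' hl']].
      apply (Dfalse _ (Dand _ _ hw (hl' (eps/2) ltac:(lra)))). intros i [[a b] c].
      specialize (hT1 r' hr'). unfold Rabs in c; destruct Rcase_abs; lra. }
    apply (Dup _ _ (Dand _ _ (Dand _ _ hv (hl (eps/2) ltac:(lra))) hup)).
    intros i [[a b] c].
    destruct (LubF (Si i) (T + eps/2) (ex_intro _ _ a) c) as [Ti [ETi [h1 h2]]].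
    rewrite ETi. simpl. specialize (h1 _ a). pose proof (c _ a) as ca.
    assert (Ti <= T + eps/2).
    { apply Rnot_lt_le. intros hlt. destruct (h2 (Ti - (T + eps/2)) ltac:(lra)) as [s [hs hs2]].
      specialize (c _ hs) ; lra. }
    revert b; unfold Rabs; repeat destruct Rcase_abs; lra.
  - rewrite (LubE Sl) by (intros s hs; apply hemp; exists s; auto). simpl.
    intros eps he.
    assert (h : D (fun i => ~ exists s, Si i s)).
    { apply Dnot. intros h.
      destruct (choose_sec (Y := fun _ => R) (fun _ => inhabits 0) Si h) as [w hw].
      destruct (H3 w hw) as [r [hr _]]. apply hemp; eauto. }
    apply (Dup _ _ h). intros i hi. rewrite LubE by (intros s hs; apply hi; eauto). simpl.
    rewrite Rminus_0_r, Rabs_R0; auto.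
Qed.

Lemma quant_inf (Si : I -> R -> Prop) (Sl : R -> Prop) (B : R) :
  D (fun i => forall s, Si i s -> Rabs s <= B) ->
  (forall r, Sl r -> exists v : I -> R, D (fun i => Si i (v i)) /\ ulim D v r) ->
  (forall v : I -> R, D (fun i => Si i (v i)) -> exists r, Sl r /\ ulim D v r) ->
  ulim D (fun i => real (Glb_Rbar (Si i))) (real (Glb_Rbar Sl)).
Proof.
  intros hB H2 H3. rewrite Glb_opp.
  apply (ulim_ext (fun i => - real (Lub_Rbar (fun x => Si i (-x))))).
  2:{ apply Dall. intros i. rewrite Glb_opp. reflexivity. }
  apply ulim_opp. apply (quant_sup _ _ B).
  - apply (Dup _ _ hB). intros i hi s hs. rewrite <- Rabs_Ropp. auto.
  - intros r hr. destruct (H2 (-r) hr) as [v [hv hl]]. exists (fun i => - v i). split.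
    + apply (Dup _ _ hv). intros i hi. rewrite Ropp_involutive; auto.
    + pose proof (ulim_opp _ _ hl). rewrite Ropp_involutive in H; auto.
  - intros v hv. destruct (H3 (fun i => - v i) hv) as [r [hr hl]]. exists (-r). split; auto.
    + rewrite Ropp_involutive; auto.
    + pose proof (ulim_opp _ _ hl). simpl in H.
      apply (ulim_ext _ _ _ H). apply Dall; intros; ring.
Qed.

End UF.

Section Main.
Context {L : Vocab} {I : Type} (D : (I -> Prop) -> Prop) (M : I -> GStruct L)
  (HD : ultrafilter D) (HM : emerging_metric D M) (Hne : forall i, inhabited (carrier (M i))).

Notation ML := (Mloc D M HD HM).

Lemma approx_refl x : approx D M x x.
Proof.
  intros n hn. apply (Dup D HD _ _ (em_refl D M HM x)). intros i ->.
  left. apply Rinv_0_lt_compat, lt_0_INR; lia.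
Qed.

Lemma approx_sym x y : approx D M x y -> approx D M y x.
Proof.
  intros h n hn. apply (Dup D HD _ _ (Dand D HD _ _ (h n hn) (em_sym D M HM x y))).
  intros i [a b]. rewrite <- b; auto.
Qed.

Lemma approx_small x y : approx D M x y -> forall delta, 0 < delta ->
  D (fun i => gd (M i) (x i) (y i) < delta).
Proof.
  intros h delta hd. destruct (archimed_cor1 delta hd) as [N [h1 h2]].
  apply (Dup D HD _ _ (h N h2)). intros i hi; lra.
Qed.

Lemma approx_trans x y z : approx D M x y -> approx D M y z -> approx D M x z.
Proof.
  intros h1 h2 n hn.
  assert (hp : 0 < / INR n) by (apply Rinv_0_lt_compat, lt_0_INR; lia).
  apply (Dup D HD _ _ (Dand D HD _ _ (Dand D HD _ _ (approx_small x y h1 (/ INR n / 2) ltac:(lra))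
     (approx_small y z h2 (/ INR n / 2) ltac:(lra))) (em_tri D M HM x y z))).
  intros i [[a b] c]. lra.
Qed.

Lemma approx_eq x y : approx D M x y -> approx D M x = approx D M y.
Proof.
  intros h. apply functional_extensionality; intros z. apply propositional_extensionality; split.
  - intros h2. apply (approx_trans y x z); auto. apply approx_sym; auto.
  - intros h2. apply (approx_trans x y z); auto.
Qed.

Lemma rep_cls c : cls D M c = approx D M (rep D M c).
Proof.
  unfold rep. exact (proj2 (proj2_sig (constructive_indefinite_description _ (cls_ok D M c)))).
Qed.

Lemma cls_rep c x : cls D M c = approx D M x -> approx D M x (rep D M c).
Proof.
  intros h. rewrite <- h, rep_cls. apply approx_refl.
Qed.

Lemma common_bound k (xs : Ix k -> seqs M) : (forall j, local D M (xs j)) ->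
  exists m, forall j, inS D M m (xs j).
Proof.
  intros hl.
  destruct (finite_bound k (fun j m => forall h : (j < k)%nat, inS D M m (xs (exist _ j h)))) as [m Hm].
  - intros j hj. destruct (hl (exist _ j hj)) as [m hm]. exists m.
    intros h. rewrite (Peano_dec.le_unique _ _ h hj). exact hm.
  - intros j m m' hle hq h. apply (inS_mono D M HD HM m m'); [exact hle|apply hq].
  - exists m. intros [j hj]. apply Hm. exact hj.
Qed.

Lemma uapp_approx f (xs ys : Ix (farity L f) -> seqs M) :
  (forall j, local D M (xs j)) -> (forall j, local D M (ys j)) ->
  (forall j, approx D M (xs j) (ys j)) -> approx D M (uapp M f xs) (uapp M f ys).
Proof.
  intros hx hy ha.
  destruct (common_bound _ xs hx) as [m1 h1]. destruct (common_bound _ ys hy) as [m2 h2].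
  intros n hn. assert (hp : 0 < / INR n) by (apply Rinv_0_lt_compat, lt_0_INR; lia).
  destruct (em_cont D M HM f (Nat.max m1 m2) (/ INR n) hp) as [delta [hd Hd]].
  apply (Dup D HD _ _ (Hd xs ys ltac:(intros j; apply (inS_mono D M HD HM m1); [lia|auto])
      ltac:(intros j; apply (inS_mono D M HD HM m2); [lia|auto])
      ltac:(intros j; apply approx_small; auto))).
  intros i hi; lra.
Qed.

Definition tev {n} (t : term L n) (x : Ix n -> seqs M) : seqs M :=
  fun i => teval (M i) t (fun j => x j i).

Lemma tev_local {n} (t : term L n) x : (forall j, local D M (x j)) -> local D M (tev t x).
Proof.
  intros hx. induction t as [j|f ts IH].
  - apply hx.
  - apply (emerging_local D M HD HM f (fun j => tev (ts j) x)). exact IH.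
Qed.

Lemma tev_cls {n} (t : term L n) (c : Ix n -> locq D M) x :
  (forall j, local D M (x j)) -> (forall j, cls D M (c j) = approx D M (x j)) ->
  cls D M (teval ML t c) = approx D M (tev t x).
Proof.
  intros hx hc. induction t as [j|f ts IH].
  - apply hc.
  - simpl. apply approx_eq. apply uapp_approx.
    + intros j. apply rep_local.
    + intros j. apply tev_local; auto.
    + intros j. apply approx_sym. apply cls_rep. apply IH.
Qed.


Lemma gS_mono i m m' b : (m <= m')%nat -> gS (M i) m b -> gS (M i) m' b.
Proof. intros hle hb. induction hle; auto. apply (em_mono D M HM); auto. Qed.

Lemma inh_fun k i : inhabited (Ix k -> carrier (M i)).
Proof. destruct (Hne i) as [a]. constructor. exact (fun _ => a). Qed.

Lemma term_bound {n} (t : term L n) m : exists k, D (fun i => forall y : Ix n -> carrier (M i),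
  (forall j, gS (M i) m (y j)) -> gS (M i) k (teval (M i) t y)).
Proof.
  induction t as [j|f ts IH].
  - exists m. apply (Dall D HD). intros i y hy. apply hy.
  - destruct (finite_bound (farity L f) (fun j k => forall h : (j < farity L f)%nat,
        D (fun i => forall y : Ix n -> carrier (M i),
          (forall j, gS (M i) m (y j)) -> gS (M i) k (teval (M i) (ts (exist _ j h)) y)))) as [K HK].
    + intros j hj. destruct (IH (exist _ j hj)) as [k hk]. exists k. intros h.
      rewrite (Peano_dec.le_unique _ _ h hj). exact hk.
    + intros j k k' hle hq h. apply (Dup D HD _ _ (hq h)). intros i hi y hy.
      apply (gS_mono i k k'); auto.
    + destruct (em_fun D M HM f K) as [K2 HK2].
      assert (HU : D (fun i => forall ys : Ix (farity L f) -> carrier (M i),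
          (forall j, gS (M i) K (ys j)) -> gS (M i) K2 (gfn (M i) f ys))).
      { apply (unif D HD (Y := fun i => Ix (farity L f) -> carrier (M i)) (fun i => inh_fun _ i)
          (fun i ys => forall j, gS (M i) K (ys j)) (fun i ys => gS (M i) K2 (gfn (M i) f ys))).
        intros z hz. apply (HK2 (fun j i => z i j)).
        intros j. apply (Dup D HD _ _ hz). intros i hi; apply hi. }
      exists K2.
      assert (HA : D (fun i => forall j : Ix (farity L f), forall y : Ix n -> carrier (M i),
          (forall j, gS (M i) m (y j)) -> gS (M i) K (teval (M i) (ts j) y))).
      { apply D_forall_Ix; auto. intros [j hj]. apply HK; exact hj. }
      apply (Dup D HD _ _ (Dand D HD _ _ HA HU)). intros i [a b] y hy.
      simpl. apply b. intros j. apply a. exact hy.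
Qed.

Lemma dist_bound k : D (fun i => forall p q, gS (M i) k p -> gS (M i) k q ->
  Rabs (gd (M i) p q) <= INR k).
Proof.
  assert (HU : D (fun i => forall pq : carrier (M i) * carrier (M i),
     gS (M i) k (fst pq) /\ gS (M i) k (snd pq) -> gd (M i) (fst pq) (snd pq) <= INR k)).
  { apply (unif D HD (Y := fun i => (carrier (M i) * carrier (M i))%type)).
    - intros i. destruct (Hne i) as [a]. constructor. exact (a, a).
    - intros z hz. apply (em_bound D M HM k (fun i => fst (z i)) (fun i => snd (z i))).
      + apply (Dup D HD _ _ hz). intros i hi; apply hi.
      + apply (Dup D HD _ _ hz). intros i hi; apply hi. }
  apply (Dup D HD _ _ HU). intros i h p q hp hq.
  pose proof (em_nonneg D M HM i p q). specialize (h (p, q) (conj hp hq)). simpl in h.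
  rewrite Rabs_pos_eq; auto.
Qed.

Lemma real_Lub_bound (S : R -> Prop) B : 0 <= B -> (forall s, S s -> Rabs s <= B) ->
  Rabs (real (Lub_Rbar S)) <= B.
Proof.
  intros hB h. destruct (classic (exists s, S s)) as [hne|hemp].
  - destruct (LubF S B hne ltac:(intros s hs; specialize (h s hs); unfold Rabs in h; destruct Rcase_abs; lra))
      as [T [ET [h1 h2]]].
    rewrite ET. simpl. destruct hne as [s0 hs0].
    pose proof (h1 s0 hs0). pose proof (h s0 hs0).
    assert (T <= B).
    { apply Rnot_lt_le. intros hlt. destruct (h2 (T - B) ltac:(lra)) as [s [hs hs2]].
      specialize (h s hs). unfold Rabs in h; destruct Rcase_abs; lra. }
    unfold Rabs in *; repeat destruct Rcase_abs; lra.
  - rewrite LubE by (intros s hs; apply hemp; eauto). simpl. rewrite Rabs_R0; auto.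
Qed.

Lemma real_Glb_bound (S : R -> Prop) B : 0 <= B -> (forall s, S s -> Rabs s <= B) ->
  Rabs (real (Glb_Rbar S)) <= B.
Proof.
  intros hB h. rewrite Glb_opp, Rabs_Ropp. apply real_Lub_bound; auto.
  intros s hs. rewrite <- Rabs_Ropp. auto.
Qed.

Lemma ext_S i {n} m (y : Ix n -> carrier (M i)) b :
  (forall j, gS (M i) m (y j)) -> gS (M i) m b -> forall j, gS (M i) m (ext y b j).
Proof. intros hy hb j. unfold ext. destruct lt_dec; auto. Qed.

Lemma eval_bound {n} (phi : formula L n) : forall m, exists N : nat,
  D (fun i => forall y : Ix n -> carrier (M i), (forall j, gS (M i) m (y j)) ->
     Rabs (eval (M i) phi y) <= INR N).
Proof.
  induction phi as [n t1 t2|n P ts|n k u hu ps IH|n mq psi IH|n mq psi IH]; intros m.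
  - destruct (term_bound t1 m) as [k1 h1]. destruct (term_bound t2 m) as [k2 h2].
    exists (Nat.max k1 k2).
    apply (Dup D HD _ _ (Dand D HD _ _ (Dand D HD _ _ h1 h2) (dist_bound (Nat.max k1 k2)))).
    intros i [[a b] c] y hy. simpl. apply c.
    + apply (gS_mono i k1); [lia|auto].
    + apply (gS_mono i k2); [lia|auto].
  - exists 1%nat. apply (Dall D HD). intros i y hy. simpl.
    destruct excluded_middle_informative; rewrite ?Rabs_R0, ?Rabs_R1; lra.
  - destruct (finite_bound k (fun j N => forall h : (j < k)%nat,
        D (fun i => forall y : Ix n -> carrier (M i), (forall j, gS (M i) m (y j)) ->
          Rabs (eval (M i) (ps (exist _ j h)) y) <= INR N))) as [N HN].
    + intros j hj. destruct (IH (exist _ j hj) m) as [N hN]. exists N. intros h.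
      rewrite (Peano_dec.le_unique _ _ h hj). exact hN.
    + intros j N N' hle hq h. apply (Dup D HD _ _ (hq h)). intros i hi y hy.
      apply Rle_trans with (INR N); [auto|apply le_INR; auto].
    + destruct (box_bounded k u hu (INR N)) as [C HC].
      destruct (INR_unbounded C) as [N2 hN2]. exists N2.
      assert (HA : D (fun i => forall j : Ix k, forall y : Ix n -> carrier (M i),
          (forall j, gS (M i) m (y j)) -> Rabs (eval (M i) (ps j) y) <= INR N)).
      { apply D_forall_Ix; auto. intros [j hj]. apply HN; exact hj. }
      apply (Dup D HD _ _ HA). intros i hi y hy. simpl.
      apply Rle_trans with C; [|lra]. apply HC. intros j. apply hi; auto.
  - destruct (IH (Nat.max m mq)) as [N HN]. exists N.
    apply (Dup D HD _ _ HN). intros i hi y hy. simpl.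
    apply real_Lub_bound; [apply pos_INR|].
    intros s [b [hb ->]]. apply hi. apply ext_S.
    + intros j. apply (gS_mono i m); [lia|auto].
    + apply (gS_mono i mq); [lia|auto].
  - destruct (IH (Nat.max m mq)) as [N HN]. exists N.
    apply (Dup D HD _ _ HN). intros i hi y hy. simpl.
    apply real_Glb_bound; [apply pos_INR|].
    intros s [b [hb ->]]. apply hi. apply ext_S.
    + intros j. apply (gS_mono i m); [lia|auto].
    + apply (gS_mono i mq); [lia|auto].
Qed.

Lemma dist_approx p p' q q' r : approx D M p p' -> approx D M q q' ->
  ulim D (fun i => gd (M i) (p' i) (q' i)) r -> ulim D (fun i => gd (M i) (p i) (q i)) r.
Proof.
  intros hp hq hl eps he.
  pose proof (approx_small _ _ hp (eps/4) ltac:(lra)) as a1.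
  pose proof (approx_small _ _ (approx_sym _ _ hp) (eps/4) ltac:(lra)) as a2.
  pose proof (approx_small _ _ hq (eps/4) ltac:(lra)) as a3.
  pose proof (approx_small _ _ (approx_sym _ _ hq) (eps/4) ltac:(lra)) as a4.
  pose proof (em_tri D M HM p p' q) as t1.
  pose proof (em_tri D M HM p' q' q) as t2.
  pose proof (em_tri D M HM p' p q') as t3.
  pose proof (em_tri D M HM p q q') as t4.
  pose proof (hl (eps/4) ltac:(lra)) as l1.
  apply (Dup D HD _ _ (Dand D HD _ _ (Dand D HD _ _ (Dand D HD _ _ a1 a2) (Dand D HD _ _ a3 a4))
     (Dand D HD _ _ (Dand D HD _ _ t1 t2) (Dand D HD _ _ (Dand D HD _ _ t3 t4) l1)))).
  intros i [[[b1 b2] [b3 b4]] [[c1 c2] [[c3 c4] c5]]].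
  revert c5. unfold Rabs; repeat destruct Rcase_abs; intros; lra.
Qed.

Lemma ext_app {n} (x : Ix n -> seqs M) (z : seqs M) i :
  (fun j => ext x z j i) = ext (fun j => x j i) (z i).
Proof. apply functional_extensionality; intros j. unfold ext. destruct lt_dec; reflexivity. Qed.

Lemma main_ulim {n} (phi : formula L n) : forall (c : Ix n -> locq D M) (x : Ix n -> seqs M),
  (forall j, local D M (x j)) -> (forall j, cls D M (c j) = approx D M (x j)) ->
  ulim D (fun i => eval (M i) phi (fun j => x j i)) (eval ML phi c).
Proof.
  induction phi as [n t1 t2|n P ts|n k u hu ps IH|n mq psi IH|n mq psi IH]; intros c x hx hc.
  -
    simpl.
    set (c1 := teval ML t1 c). set (c2 := teval ML t2 c).
    apply (dist_approx (tev t1 x) (rep D M c1) (tev t2 x) (rep D M c2)).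
    + apply cls_rep. apply tev_cls; auto.
    + apply cls_rep. apply tev_cls; auto.
    + unfold Dlim. apply epsilon_spec.
      destruct (common_bound 2 (fun j => if Nat.eq_dec (proj1_sig j) 0 then rep D M c1 else rep D M c2))
        as [m hm].
      { intros j; destruct Nat.eq_dec; apply rep_local. }
      apply (ulim_exists D HD _ (INR m)).
      pose proof (hm (exist (fun a => (a < 2)%nat) 0%nat (Nat.lt_0_succ 1))) as h1. simpl in h1.
      pose proof (hm (exist (fun a => (a < 2)%nat) 1%nat (Nat.lt_succ_diag_r 1))) as h2. simpl in h2.
      apply (Dup D HD _ _ (Dand D HD _ _ (Dand D HD _ _ h1 h2) (dist_bound m))).
      intros i [[a b] d]. apply d; auto.
  -
    simpl.
    set (tx := fun j => tev (ts j) x).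
    assert (htx : forall j, cls D M (teval ML (ts j) c) = approx D M (tx j)).
    { intros j. apply tev_cls; auto. }
    assert (hloc : forall j, local D M (tx j)) by (intros j; apply tev_local; auto).
    destruct (classic (urel D M P tx)) as [hu|hu].
    + destruct excluded_middle_informative as [_|hn].
      2:{ exfalso. apply hn. exists tx. split; auto. }
      intros eps he. apply (Dup D HD _ _ hu). intros i hi.
      destruct excluded_middle_informative as [_|hn]; [|contradiction].
      rewrite Rminus_0_r, Rabs_R0; auto.
    + destruct excluded_middle_informative as [[ys [hys hur]]|_].
      * exfalso. destruct (common_bound _ tx hloc) as [m hm].
        destruct (em_rel D M HM P m tx hm hu) as [delta [hd Hd]].
        apply (Hd ys); auto. intros j. apply approx_small; auto.
        destruct (hys j) as [_ e]. rewrite <- htx, e. apply approx_refl.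
      * intros eps he. apply (Dup D HD _ _ (Dnot D HD _ hu)). intros i hi.
        destruct excluded_middle_informative as [h|_]; [contradiction|].
        rewrite Rminus_eq_0, Rabs_R0; auto.
  -
    simpl. intros eps he.
    destruct (hu (fun j => eval ML (ps j) c) eps he) as [delta [hd Hd]].
    apply (Dup D HD _ _ (D_forall_Ix D HD _ _ (fun j => IH j c x hx hc delta hd))).
    intros i hi. apply Hd. intros j. apply hi.
  -
    simpl.
    destruct (common_bound _ x hx) as [m' hm'].
    destruct (eval_bound psi (Nat.max m' mq)) as [N HN].
    apply (quant_sup D HD _ _ (INR N)).
    + apply (Dup D HD _ _ (Dand D HD _ _ (D_forall_Ix D HD _ _ hm') HN)).
      intros i [a b] s [bb [hb ->]]. apply b. apply ext_S.
      * intros j. apply (gS_mono i m'); [lia|apply a].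
      * apply (gS_mono i mq); [lia|auto].
    + intros r [b [[z [hz hbz]] ->]].
      exists (fun i => eval (M i) psi (ext (fun j => x j i) (z i))). split.
      * apply (Dup D HD _ _ hz). intros i hi. exists (z i); auto.
      * pose proof (IH (ext c b) (ext x z)) as H.
        apply (ulim_ext D HD _ _ _ (H ltac:(intros j; unfold ext; destruct lt_dec; [apply hx|exists mq; exact hz])
           ltac:(intros j; unfold ext; destruct lt_dec; [apply hc|exact hbz]))).
        apply (Dall D HD). intros i. rewrite ext_app. reflexivity.
    + intros v hv.
      destruct (choose_sec D HD (Y := fun i => carrier (M i)) Hne
          (fun i b => gS (M i) mq b /\ v i = eval (M i) psi (ext (fun j => x j i) b)) hv) as [z hz].
      assert (hzl : local D M z) by (exists mq; apply (Dup D HD _ _ hz); intros i hi; apply hi).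
      exists (eval ML psi (ext c (lm D M z hzl))). split.
      * exists (lm D M z hzl). split; [|reflexivity]. exists z. split; [|reflexivity].
        apply (Dup D HD _ _ hz); intros i hi; apply hi.
      * pose proof (IH (ext c (lm D M z hzl)) (ext x z)) as H.
        apply (ulim_ext D HD _ _ _ (H ltac:(intros j; unfold ext; destruct lt_dec; [apply hx|exact hzl])
           ltac:(intros j; unfold ext; destruct lt_dec; [apply hc|reflexivity]))).
        apply (Dup D HD _ _ hz). intros i [_ e]. rewrite e, ext_app. reflexivity.
  -
    simpl.
    destruct (common_bound _ x hx) as [m' hm'].
    destruct (eval_bound psi (Nat.max m' mq)) as [N HN].
    apply (quant_inf D HD _ _ (INR N)).
    + apply (Dup D HD _ _ (Dand D HD _ _ (D_forall_Ix D HD _ _ hm') HN)).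
      intros i [a b] s [bb [hb ->]]. apply b. apply ext_S.
      * intros j. apply (gS_mono i m'); [lia|apply a].
      * apply (gS_mono i mq); [lia|auto].
    + intros r [b [[z [hz hbz]] ->]].
      exists (fun i => eval (M i) psi (ext (fun j => x j i) (z i))). split.
      * apply (Dup D HD _ _ hz). intros i hi. exists (z i); auto.
      * pose proof (IH (ext c b) (ext x z)) as H.
        apply (ulim_ext D HD _ _ _ (H ltac:(intros j; unfold ext; destruct lt_dec; [apply hx|exists mq; exact hz])
           ltac:(intros j; unfold ext; destruct lt_dec; [apply hc|exact hbz]))).
        apply (Dall D HD). intros i. rewrite ext_app. reflexivity.
    + intros v hv.
      destruct (choose_sec D HD (Y := fun i => carrier (M i)) Hne
          (fun i b => gS (M i) mq b /\ v i = eval (M i) psi (ext (fun j => x j i) b)) hv) as [z hz].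
      assert (hzl : local D M z) by (exists mq; apply (Dup D HD _ _ hz); intros i hi; apply hi).
      exists (eval ML psi (ext c (lm D M z hzl))). split.
      * exists (lm D M z hzl). split; [|reflexivity]. exists z. split; [|reflexivity].
        apply (Dup D HD _ _ hz); intros i hi; apply hi.
      * pose proof (IH (ext c (lm D M z hzl)) (ext x z)) as H.
        apply (ulim_ext D HD _ _ _ (H ltac:(intros j; unfold ext; destruct lt_dec; [apply hx|exact hzl])
           ltac:(intros j; unfold ext; destruct lt_dec; [apply hc|reflexivity]))).
        apply (Dup D HD _ _ hz). intros i [_ e]. rewrite e, ext_app. reflexivity.
Qed.

End Main.

Theorem theorem2p10 (L : Vocab) (I : Type) (D : (I -> Prop) -> Prop)
  (M : I -> GStruct L) (HD : ultrafilter D) (HM : emerging_metric D M)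
  (Hne : forall i, inhabited (carrier (M i)))
  (n : nat) (sigma : formula L n) (m0 : nat)
  (a : forall i, Ix n -> carrier (M i))
  (Ha : forall i (j : Ix n), gS (M i) m0 (a i j)) :
  ulim D (fun i => eval (M i) sigma (a i))
    (eval (Mloc D M HD HM) sigma
       (fun j => lm D M (fun i => a i j)
                   (all_local D M HD m0 (fun i => a i j) (fun i => Ha i j)))).
Proof.
  exact (main_ulim D M HD HM Hne sigma (fun j => lm D M (fun i => a i j)
                   (all_local D M HD m0 (fun i => a i j) (fun i => Ha i j))) (fun j i => a i j)
    (fun j => all_local D M HD m0 (fun i => a i j) (fun i => Ha i j))
    (fun j => eq_refl)).
Qed.
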